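(* Assume conditions (i) and (ii) of the context. There exists a polynomial $h_1:\mathbb R^3\to\mathbb R$ such that for all $d\in\mathbb N$, every architecture $a$ with input dimension $d$, every $R\in(0,\infty)$, all $K,D\in[1,\infty)$ and every $\varepsilon\in(0,1)$ with $K\ge h_1(\varepsilon^{-1},d,D)$, it holds with $\mathcal H=\mathcal N_{a,R,D}$ that $$\sup_{f\in\mathcal H}\big|\mathcal E_d^{(K)}(f)-\mathcal E_d(f)\big|\le\varepsilon.$$
   Context: Fix $T\in(0,\infty)$ and reals $u<v$. For each $d\in\mathbb N$: $\mu_d:\mathbb R^d\to\mathbb R^d$, $\sigma_d:\mathbb R^d\to\mathbb R^{d\times d}$ Lipschitz, $\varphi_d:\mathbb R^d\to\mathbb R$ measurable; on a filtered probability space, $B$ a standard $d$-dimensional Brownian motion, $X_d$ uniform on $[u,v]^d$ and $\mathcal F_0$-measurable, $S_t=X_d+\int_0^t\mu_d(S_s)ds+\int_0^t\sigma_d(S_s)dB_s$, $Y_d=S_T=(Y_{d,1},\dots,Y_{d,d})$. Risk $\mathcal E_d(f)=\mathbb E[(f(X_d)-\varphi_d(Y_d))^2]$; truncation $\varphi_d^{(K)}(x)=\mathbf 1\{\|x\|_\infty\le K\}\varphi_d(x)$ and $\mathcal E_d^{(K)}(f)=\mathbb E[(f(X_d)-\varphi_d^{(K)}(Y_d))^2]$. Conditions: (i) there is $c_1\in(0,\infty)$ with $\mathbb P(|Y_{d,i}|\ge t)\le2\exp\{-c_1(\log t)^2\}$ for all $d$, $t\ge1$, $i\le d$; (ii)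 there are $c_2\in(0,\infty)$, $\lambda\in[2,\infty)$ with $|\varphi_d(y)|\le c_2(1+\|y\|_2^\lambda)$ for all $d$, $y\in\mathbb R^d$. ReLU networks: for $L\in\mathbb N$ and architecture $a=(N_0,N_1,\dots,N_L)$ with $N_0=d$, $N_L=1$, parameters $\theta=((A_1,b_1),\dots,(A_L,b_L))$, $A_l\in\mathbb R^{N_l\times N_{l-1}}$, $b_l\in\mathbb R^{N_l}$, realize $\Phi_\theta=W_L\circ\rho\circ W_{L-1}\circ\cdots\circ\rho\circ W_1$ with $W_l(x)=A_lx+b_l$ and $\rho$ the componentwise ReLU $\max\{\cdot,0\}$; $\|\theta\|_\infty$ is the maximal absolute entry; $P(a)=\sum_{l=1}^L N_l(N_{l-1}+1)$; $\mathcal N_{a,R}=\{\Phi_\theta|_{[u,v]^d}:\|\theta\|_\infty\le R\}$; $\mathrm{Clip}_D(x)=\min\{|x|,D\}\operatorname{sgn}(x)$; $\mathcal N_{a,R,D}=\{\mathrm{Clip}_D\circ\Phi:\Phi\in\mathcal N_{a,R}\}$. *)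

(* Defs.v *)
From HB Require Import structures.
From mathcomp Require Import all_boot all_order all_algebra.
From mathcomp Require Import all_classical all_reals all_analysis.
Set Implicit Arguments. Unset Strict Implicit. Unset Printing Implicit Defensive.
Import Order.TTheory GRing.Theory Num.Theory Num.Def.
Local Open Scope classical_set_scope.
Local Open Scope ring_scope.

Section Defs.
Variable R : realType.

Definition norm2 n (y : n.-tuple R) : R := Num.sqrt (\sum_(i < n) (tnth y i) ^+ 2).
Definition norminf n (y : n.-tuple R) : R := \big[Num.max/0]_(i < n) `|tnth y i|.

Definition truncphi n (K : R) (phi : n.-tuple R -> R) (y : n.-tuple R) : R :=
  if norminf y <= K then phi y else 0.

Definition clip (D x : R) : R := Num.min `|x| D * sgr x.

Definition relu (x : R) : R := Num.max x 0.

(* Architecture a = (N_0, ..., N_L), L >= 1, N_0 = d, N_L = 1, widths positive *)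
Definition arch (d : nat) (a : seq nat) : Prop :=
  (2 <= size a)%N /\ head 0%N a = d /\ last 0%N a = 1%N /\ all (fun w => 0 < w)%N a.

(* Parameters theta = ((A_1,b_1),...,(A_L,b_L)): entry (i,j) of A_l is A l i j,
   entry i of b_l is b l i (indices i < N_l, j < N_{l-1}; other values unused). *)
Definition param_bound (a : seq nat) (Rb : R)
    (A : nat -> nat -> nat -> R) (b : nat -> nat -> R) : Prop :=
  forall l i j, (1 <= l <= (size a).-1)%N -> (i < nth 0 a l)%N -> (j < nth 0 a l.-1)%N ->
    `|A l i j| <= Rb /\ `|b l i| <= Rb.

(* W_L o rho o W_{L-1} o ... o rho o W_1, acting on vectors represented as nat -> R;
   l is the index of the current layer, ws the remaining widths (N_{l-1} :: N_l :: ...). *)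
Fixpoint realize_from (A : nat -> nat -> nat -> R) (b : nat -> nat -> R)
    (l : nat) (ws : seq nat) (x : nat -> R) : nat -> R :=
  match ws with
  | n0 :: ws' =>
    match ws' with
    | [::] => x
    | _ :: ws'' =>
      let y := fun i => \sum_(j < n0) A l i j * x j + b l i in
      if ws'' is [::] then y
      else realize_from A b l.+1 ws' (fun i => relu (y i))
    end
  | [::] => x
  end.

(* Phi_theta(x) in R (the output layer has width N_L = 1, its single entry is index 0) *)
Definition realization (a : seq nat) A b n (x : n.-tuple R) : R :=
  realize_from A b 1 a (fun j => nth 0 (tval x) j) 0%N.

Definition clipped_net (a : seq nat) A b (D : R) n (x : n.-tuple R) : R :=
  clip D (realization a A b x).

Definition poly3 (N : nat) (c : nat -> nat -> nat -> R) (x y z : R) : R :=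
  \sum_(i < N) \sum_(j < N) \sum_(k < N) c i j k * x ^+ i * y ^+ j * z ^+ k.

(* X is uniformly distributed on [u,v]^n: X is a random vector whose law
   agrees with the n-fold product of the uniform law on [u,v] on measurable
   rectangles (which determines the law). *)
Definition uniform_cube (u v : R) (huv : u < v) (n : nat) d (Om : measurableType d)
    (P : probability Om R) (X : Om -> n.-tuple R) : Prop :=
  measurable_fun setT X /\
  forall S : 'I_n -> set R, (forall i, measurable (S i)) ->
    P (X @^-1` [set x | forall i, S i (tnth x i)]) =
    (\prod_(i < n) uniform_prob huv (S i))%E.

Definition risk n d (Om : measurableType d) (P : probability Om R)
    (X Y : Om -> n.-tuple R) (f g : n.-tuple R -> R) : \bar R :=
  (\int[P]_w ((f (X w) - g (Y w)) ^+ 2)%:E)%E.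

End Defs.

(* Main.v *)
Require Import Defs.
From HB Require Import structures.
From mathcomp Require Import all_boot all_order all_algebra.
From mathcomp Require Import all_classical all_reals all_analysis.
From mathcomp Require Import ring lra measurable_realfun.
Import Order.TTheory GRing.Theory Num.Theory Num.Def.
Local Open Scope classical_set_scope.
Local Open Scope ring_scope.

Section H.
Variable R : realType.

Lemma norminf_ge0 n (y : n.-tuple R) : 0 <= norminf y.
Proof. exact: bigmax_ge_id. Qed.

Lemma le_norminf n (y : n.-tuple R) i : `|tnth y i| <= norminf y.
Proof. rewrite /norminf; exact: le_bigmax. Qed.

Lemma norminf_gt n (y : n.-tuple R) x : 0 <= x -> x < norminf y ->
  exists i, x < `|tnth y i|.
Proof.
move=> x0 hx; case: (boolP [exists i, x < `|tnth y i|]) => [/existsP//|].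
rewrite negb_exists => /forallP H; exfalso.
have : norminf y <= x.
  apply/bigmax_leP; split => // i _; by rewrite leNgt H.
by rewrite leNgt hx.
Qed.

Lemma norm2_le n (y : n.-tuple R) : norm2 y <= Num.sqrt n%:R * norminf y.
Proof.
have M0 : 0 <= norminf y by apply: norminf_ge0.
have -> : norminf y = Num.sqrt (norminf y ^+ 2) by rewrite sqrtr_sqr ger0_norm.
rewrite /norm2 -sqrtrM ?ler0n // ler_sqrt ?mulr_ge0 ?ler0n ?sqr_ge0 //.
rewrite (_ : n%:R * _ = \sum_(i < n) norminf y ^+ 2); last first.
  by rewrite sumr_const card_ord mulr_natl.
apply: ler_sum => i _.
rewrite -real_normK ?num_real // ler_sqr ?nnegrE ?normr_ge0 //.
exact: le_norminf.
Qed.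

Lemma clipE (D x : R) : 0 <= D -> clip D x = Num.max (- D) (Num.min x D).
Proof.
move=> D0; rewrite /clip.
case: (ltrgt0P x) => hx.
- rewrite gtr0_sg // mulr1.
  have h : - D <= Num.min x D by rewrite le_min; apply/andP; split; lra.
  by rewrite (max_idPr h).
- rewrite ltr0_sg // mulrN1.
  rewrite (min_idPl (ltW (lt_le_trans hx D0))).
  case: (lerP (-x) D) => h.
  + by rewrite opprK (max_idPr _) //; lra.
  + by rewrite (max_idPl _) //; lra.
- rewrite ?hx sgr0 mulr0 (min_idPl D0) (max_idPr _) //; lra.
Qed.

Lemma clip_norm (D x : R) : 0 <= D -> `|clip D x| <= D.
Proof.
move=> D0; rewrite clipE // ler_norml; apply/andP; split.
- by rewrite le_max lexx.
- rewrite ge_max; apply/andP; split; first lra.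
  by rewrite ge_min lexx orbT.
Qed.

Lemma dyadic (K M : R) : 0 < K -> K < M ->
  exists k : nat, 2 ^+ k * K < M /\ M <= 2 ^+ k.+1 * K.
Proof.
move=> K0 KM.
have [m Hm] : exists m : nat, M <= 2 ^+ m * K.
  have M0 : 0 <= M / K by rewrite divr_ge0 //; lra.
  exists (Num.bound (M / K)).
  have h1 := archi_boundP M0.
  have h2 : (Num.bound (M / K))%:R <= 2 ^+ Num.bound (M / K) :> R.
    by rewrite -natrX ler_nat ltnW // ltn_expl.
  by rewrite -ler_pdivrMr //; lra.
elim: m Hm => [|m IH] Hm; first by rewrite expr0 mul1r in Hm; lra.
case: (lerP M (2 ^+ m * K)) => h; first exact: IH.
by exists m.
Qed.

End H.
Section M.
Context d (T : measurableType d) (R : realType).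

Lemma meas_bigmax (I : Type) (r : seq I) (Pp : pred I) (F : I -> T -> R) :
  (forall i, measurable_fun setT (F i)) ->
  measurable_fun setT (fun w => \big[Num.max/0]_(i <- r | Pp i) F i w).
Proof.
move=> mF; elim: r => [|i r IH].
  under eq_fun do rewrite big_nil. exact: measurable_cst.
under eq_fun do rewrite big_cons.
case: (Pp i) => //.
exact: measurable_realfun.measurable_maxr.
Qed.

Lemma meas_norminf n (Y : T -> n.-tuple R) : measurable_fun setT Y ->
  measurable_fun setT (fun w => norminf (Y w)).
Proof.
move=> mY; rewrite /norminf; apply: meas_bigmax => i.
apply: (measurableT_comp (@measurable_realfun.normr_measurable R setT)).
exact: (measurableT_comp (measurable_tnth i) mY).
Qed.

Lemma meas_nth n (Y : T -> n.-tuple R) j : measurable_fun setT Y ->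
  measurable_fun setT (fun w => nth 0 (tval (Y w)) j).
Proof.
move=> mY; case: (ltnP j n) => hj.
  under eq_fun do rewrite -(tnth_nth 0 (Y _) (Ordinal hj)).
  exact: (measurableT_comp (measurable_tnth (Ordinal hj)) mY).
under eq_fun do rewrite nth_default ?size_tuple //.
exact: measurable_cst.
Qed.

Lemma meas_realize (A : nat -> nat -> nat -> R) (b : nat -> nat -> R) ws :
  forall l (x : nat -> T -> R), (forall j, measurable_fun setT (x j)) ->
  forall i, measurable_fun setT (fun w => realize_from A b l ws (fun j => x j w) i).
Proof.
elim: ws => [|n0 ws IH] l x mx i /=; first exact: mx.
case: ws IH => [|m ws''] IH /=; first exact: mx.
have my : forall i, measurable_fun setT
   (fun w => \sum_(j < n0) A l i j * x j w + b l i).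
  move=> k; apply: measurable_realfun.measurable_funD; last exact: measurable_cst.
  apply: measurable_sum => j.
  apply: measurable_realfun.measurable_funM; [exact: measurable_cst|exact: mx].
case: ws'' IH => [|p ws'''] IH; first exact: my.
apply: (IH l.+1 (fun i w => relu (\sum_(j < n0) A l i j * x j w + b l i))).
move=> k; rewrite /relu.
exact: (measurable_realfun.measurable_maxr (my k) (measurable_cst _)).
Qed.

Lemma meas_net (a : seq nat) A b (D : R) n (X : T -> n.-tuple R) : 0 <= D ->
  measurable_fun setT X ->
  measurable_fun setT (fun w => clipped_net a A b D (X w)).
Proof.
move=> D0 mX; rewrite /clipped_net.
under eq_fun do rewrite clipE //.
apply: measurable_realfun.measurable_maxr; first exact: measurable_cst.
apply: measurable_realfun.measurable_minr; last exact: measurable_cst.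
rewrite /realization.
apply: (meas_realize A b a 1 (fun j w => nth 0 (tval (X w)) j)).
by move=> j; apply: meas_nth.
Qed.

End M.

Section P3.
Variable R : realType.

Lemma sum_ge_term N (F : 'I_N -> R) i : (forall j, 0 <= F j) -> F i <= \sum_j F j.
Proof. by move=> F0; rewrite (bigD1 i) //= ler_wpDr // sumr_ge0. Qed.

Lemma poly3_ge N (c : nat -> nat -> nat -> R) (x y z : R) i j k :
  (i < N)%N -> (j < N)%N -> (k < N)%N ->
  (forall i j k, 0 <= c i j k) -> 0 <= x -> 0 <= y -> 0 <= z ->
  c i j k * x ^+ i * y ^+ j * z ^+ k <= poly3 N c x y z.
Proof.
move=> hi hj hk c0 x0 y0 z0.
have t0 : forall i j k, 0 <= c i j k * x ^+ i * y ^+ j * z ^+ k.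
  by move=> *; rewrite !mulr_ge0 // exprn_ge0.
rewrite /poly3.
pose F3 := fun (i0 j0 k0 : nat) => c i0 j0 k0 * x ^+ i0 * y ^+ j0 * z ^+ k0.
have s1 := @sum_ge_term N (fun i0 : 'I_N => \sum_(j0 < N) \sum_(k0 < N) F3 i0 j0 k0) (Ordinal hi).
have s2 := @sum_ge_term N (fun j0 : 'I_N => \sum_(k0 < N) F3 i j0 k0) (Ordinal hj).
have s3 := @sum_ge_term N (fun k0 : 'I_N => F3 i j k0) (Ordinal hk).
apply: le_trans (s1 _); last first.
  by move=> i'; do 2 (apply: sumr_ge0 => ? _); apply: t0.
apply: le_trans (s2 _); last first.
  by move=> j'; apply: sumr_ge0 => ? _; apply: t0.
by apply: le_trans (s3 _) => // k0; apply: t0.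
Qed.

End P3.

Section Tail.
Context d (T : measurableType d) (R : realType) (P : probability T R).

Lemma meas_ge (f : T -> R) (x : R) : measurable_fun setT f ->
  measurable [set w | x <= f w].
Proof.
move=> mf; have := mf measurableT _ (measurable_itv `[x, +oo[).
rewrite setTI; congr measurable; apply/seteqP; split => w /=;
  by rewrite in_itv /= andbT.
Qed.

Lemma meas_gt (f : T -> R) (x : R) : measurable_fun setT f ->
  measurable [set w | x < f w].
Proof.
move=> mf; have := mf measurableT _ (measurable_itv `]x, +oo[).
rewrite setTI; congr measurable; apply/seteqP; split => w /=;
  by rewrite in_itv /= andbT.
Qed.

Lemma tail_bound n (Y : T -> n.-tuple R) (c1 : R) : measurable_fun setT Y ->
  (forall (t : R) (i : 'I_n), 1 <= t ->
     (P [set w | (t <= `|tnth (Y w) i|)%R] <= (2 * expR (- (c1 * (ln t) ^+ 2)))%R%:E)%E) ->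
  forall x, 1 <= x ->
  (P [set w | (x < norminf (Y w))%R] <= (n%:R * (2 * expR (- (c1 * (ln x) ^+ 2))))%:E)%E.
Proof.
move=> mY H x x1.
have mF : forall k, measurable_fun setT (fun w => `|nth 0 (tval (Y w)) k|).
  move=> k; apply: (measurableT_comp (@measurable_realfun.normr_measurable R setT)).
  exact: meas_nth.
apply: (le_trans (@content_subadditive _ _ _ P _
   (fun k => [set w | x <= `|nth 0 (tval (Y w)) k|]) n _ _ _)).
- by move=> k _; apply: meas_ge.
- by apply: meas_gt; apply: meas_norminf.
- move=> w /= hw.
  have [i hi] := @norminf_gt R n (Y w) x (ltW (lt_le_trans ltr01 x1)) hw.
  rewrite -(bigcup_mkord n (fun k => [set w0 | x <= `|(Y w0)`_k|])); exists (nat_of_ord i) => //=.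
  by rewrite -(tnth_nth 0 (Y w) i); apply: ltW.
have HH : forall k : 'I_n, (P [set w | (x <= `|nth 0 (tval (Y w)) k|)%R] <=
   (2 * expR (- (c1 * (ln x) ^+ 2)))%:E)%E.
  move=> k; rewrite (_ : [set w | _] = [set w | x <= `|tnth (Y w) k|]); first exact: H.
  by apply/seteqP; split => w /=; rewrite (tnth_nth 0).
apply: le_trans. { apply: lee_sum => k _. exact: HH k. }
by rewrite sumEFin sumr_const card_ord lee_fin [X in _ <= X]mulr_natl.
Qed.

End Tail.

Section AbsA.
Context d (T : measurableType d) (R : realType) (P : probability T R).
Local Open Scope ereal_scope.

Lemma sq_le (u B : R) : (`|u| <= B)%R -> (u ^+ 2 <= B ^+ 2)%R.
Proof. by move=> /[dup] h; rewrite ler_norml => /andP[h1 h2]; nra. Qed.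

Lemma absA (fX gY M : T -> R) (K D Cb eps : R) (G : T -> \bar R) :
  measurable_fun setT fX -> measurable_fun setT gY -> measurable_fun setT M ->
  (forall w, `|fX w| <= D)%R ->
  (forall w, M w <= K -> `|gY w| <= Cb)%R ->
  measurable_fun [set w | (K < M w)%R] G ->
  (forall w, (K < M w)%R -> 0 <= G w) ->
  (forall w, (K < M w)%R -> ((fX w) ^+ 2)%:E <= G w /\ ((fX w - gY w) ^+ 2)%:E <= G w) ->
  \int[P]_(w in [set w | (K < M w)%R]) G w <= eps%:E ->
  `| \int[P]_w ((fX w - (if M w <= K then gY w else 0)) ^+ 2)%:E
     - \int[P]_w ((fX w - gY w) ^+ 2)%:E | <= eps%:E.
Proof.
move=> mfX mgY mM hf hg mG G0 hG hint.
set E := [set w | (K < M w)%R].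
have mE : measurable E.
  have := mM measurableT _ (measurable_itv `]K, +oo[).
  rewrite setTI; congr measurable; apply/seteqP; split => w /=;
    by rewrite in_itv /= andbT.
have mEc : measurable (~` E) by apply: measurableC.
set F1 := fun w => ((fX w - (if M w <= K then gY w else 0)) ^+ 2)%:E.
set F2 := fun w => ((fX w - gY w) ^+ 2)%:E.
have mF1 : measurable_fun setT F1.
  apply/measurable_EFinP; apply: measurable_funX.
  apply: measurable_funB => //.
  apply: measurable_fun_ifT => //. exact: (measurable_fun_ler mM (measurable_cst K)).
have mF2 : measurable_fun setT F2.
  apply/measurable_EFinP; apply: measurable_funX.
  exact: measurable_funB.
have split : forall F, measurable_fun setT F ->
    \int[P]_w F w = \int[P]_(w in E) F w + \int[P]_(w in ~` E) F w.
  move=> F mF; rewrite -integral_setU //. all: try by rewrite setUv.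
  by apply/disj_setPLR => w; rewrite setCK.
rewrite (split _ mF1) (split _ mF2).
have e1 : \int[P]_(w in E) F1 w = \int[P]_(w in E) ((fX w) ^+ 2)%:E.
  apply: eq_integral => w; rewrite inE /= => hw.
  by rewrite /F1 leNgt hw /= subr0.
have e2 : \int[P]_(w in ~` E) F1 w = \int[P]_(w in ~` E) F2 w.
  apply: eq_integral => w; rewrite inE /= => hw.
  by rewrite /F1 /F2 leNgt (negbTE (introN idP hw)).
rewrite e1 e2.
set a1 := \int[P]_(w in E) _.
set a2 := \int[P]_(w in E) F2 w.
set c := \int[P]_(w in ~` E) F2 w.
have a10 : 0 <= a1 by apply: integral_ge0 => w _; rewrite lee_fin sqr_ge0.
have a20 : 0 <= a2 by apply: integral_ge0 => w _; rewrite lee_fin sqr_ge0.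
have c0 : 0 <= c by apply: integral_ge0 => w _; rewrite lee_fin sqr_ge0.
have a1e : a1 <= eps%:E.
  apply: le_trans hint; apply: ge0_le_integral => //.
  - by move=> w _; rewrite lee_fin sqr_ge0.
  - apply/measurable_EFinP; apply: measurable_funX.
    exact: measurable_funS mfX.
  - by move=> w hw; case: (hG w hw).
have a2e : a2 <= eps%:E.
  apply: le_trans hint; apply: ge0_le_integral => //.
  - by move=> w _; rewrite lee_fin sqr_ge0.
  - exact: measurable_funS mF2.
  - by move=> w hw; case: (hG w hw).
have cfin : c \is a fin_num.
  rewrite ge0_fin_numE //.
  apply: (@le_lt_trans _ _ (\int[P]_(w in ~` E) (cst ((D + Cb) ^+ 2)%:E) w)).
    apply: ge0_le_integral => //.
    - by move=> w _; rewrite lee_fin sqr_ge0.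
    - exact: measurable_funS mF2.
    - move=> w hw; rewrite lee_fin; apply: sq_le.
      apply: le_trans (ler_normB _ _) _; apply: lerD; first exact: hf.
      by apply: hg; rewrite leNgt; apply/negP.
  rewrite integral_cst //.
  have := fin_num_measure P (~` E) mEc.
  rewrite ge0_fin_numE // => hP; apply: lte_mul_pinfty => //; rewrite ?lee_fin ?sqr_ge0 //.
have a1f : a1 \is a fin_num by rewrite ge0_fin_numE // (le_lt_trans a1e) ?ltry.
have a2f : a2 \is a fin_num by rewrite ge0_fin_numE // (le_lt_trans a2e) ?ltry.
move: a10 a20 a1e a2e.
rewrite -(fineK a1f) -(fineK a2f) -(fineK cfin) !lee_fin.
move: (fine a1) (fine a2) (fine c) => x y z hx hy hxe hye.
have -> : (x + z - (y + z) = x - y)%R by lra.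
by rewrite ler_norml; apply/andP; split; lra.
Qed.

End AbsA.

Section Num.
Variable R : realType.

Lemma key_exp (lam c1 a : R) : 0 < c1 -> 0 <= a -> 2 * lam + 1 <= c1 * a ->
  expR (lam * (ln 2 + a)) ^+ 2 * expR (- (c1 * a ^+ 2)) <=
  expR (2 * lam * ln 2) * expR (- a).
Proof.
move=> c0 a0 h; rewrite expr2 -!expRD ler_expR.
have : (2 * lam + 1) * a <= c1 * a * a by rewrite ler_wpM2r.
nra.
Qed.

Lemma num1 (A W eps K p : R) : 0 < K -> 0 < p -> 0 <= W ->
  A <= 2 * W / (p * K) -> 4 * W <= eps * K -> A <= eps / (2 * p).
Proof.
move=> K0 p0 W0 hA hW; apply: le_trans hA _.
have -> : 2 * W / (p * K) = (4 * W / K) / (2 * p).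
  by field; apply/andP; split; rewrite gt_eqF.
apply: ler_wpM2r; first by rewrite invr_ge0 mulr_ge0 // ltW.
by rewrite ler_pdivrMr.
Qed.

Lemma term_bound (n : nat) (L k : nat) (c1 lam Bc K eps : R) :
  (1 <= n)%N -> 0 < c1 -> 0 <= Bc -> 1 <= K -> (2 * lam + 1) / c1 <= ln K ->
  4 * (Bc * expR (2 * lam * ln 2) * n%:R ^+ (2 * L + 1)) <= eps * K ->
  Bc * (n%:R ^+ L * (2 ^+ k.+1 * K) `^ lam) ^+ 2 *
    (n%:R * (2 * expR (- (c1 * ln (2 ^+ k * K) ^+ 2))))
  <= eps / (2 ^ k.+1)%:R.
Proof.
move=> n1 c0 B0 K1 hK hW.
set p : R := 2 ^+ k.
have p0 : 0 < p by rewrite exprn_gt0.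
have K0 : 0 < K by lra.
set x := p * K.
have p1 : 1 <= p by rewrite exprn_ege1 // ler1n.
have x1 : 1 <= x by rewrite /x; nra.
have x0 : 0 < x by lra.
have -> : (2 ^ k.+1)%:R = 2 * p :> R by rewrite natrX exprS.
have -> : 2 ^+ k.+1 * K = 2 * x by rewrite exprS /x /p mulrA.
have -> : (2 * x) `^ lam = expR (lam * (ln 2 + ln x)).
  by rewrite /powR gt_eqF ?mulr_gt0 // lnM ?posrE.
set a := ln x.
have a0 : 0 <= a by apply: ln_ge0.
have aK : ln K <= a by rewrite /a ler_ln ?posrE //; rewrite /x; nra.
have ha : 2 * lam + 1 <= c1 * a.
  by rewrite [c1 * a]mulrC -ler_pdivrMr //; apply: le_trans hK aK.
have key := key_exp lam c1 a c0 a0 ha.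
have ex : expR (- a) = x^-1 by rewrite expRN lnK ?posrE.
rewrite ex in key.
set Z := expR (lam * (ln 2 + a)) in key *.
set E := expR (- (c1 * a ^+ 2)) in key *.
set C4 := expR (2 * lam * ln 2) in key hW *.
have eN : n%:R ^+ (2 * L + 1) = (n%:R ^+ L) ^+ 2 * n%:R :> R.
  by rewrite exprD expr1 mulnC exprM.
apply: (num1 _ (Bc * C4 * n%:R ^+ (2 * L + 1)) eps K p) => //.
  by rewrite !mulr_ge0 // ?expR_ge0 ?exprn_ge0 ?ler0n // /C4 ltW ?expR_gt0.
have -> : Bc * (n%:R ^+ L * Z) ^+ 2 * (n%:R * (2 * E)) =
   (2 * (Bc * n%:R ^+ (2 * L + 1))) * (Z ^+ 2 * E).
  by rewrite eN; ring.
have -> : 2 * (Bc * C4 * n%:R ^+ (2 * L + 1)) / (p * K) =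
   (2 * (Bc * n%:R ^+ (2 * L + 1))) * (C4 * x^-1).
  by rewrite /x eN; field; rewrite !gt_eqF.
by rewrite ler_wpM2l // !mulr_ge0 ?exprn_ge0 ?ler0n.
Qed.

End Num.

Section SerB.
Context d (T : measurableType d) (R : realType) (P : probability T R).
Local Open Scope ereal_scope.

Lemma seriesB n (M : T -> R) (c1 lam Bc K eps : R) (L : nat) :
  measurable_fun setT M -> (1 <= n)%N ->
  (forall x, (1 <= x)%R -> P [set w | (x < M w)%R] <=
      (n%:R * (2 * expR (- (c1 * (ln x) ^+ 2))))%:E) ->
  (0 < c1)%R -> (0 <= lam)%R -> (0 <= Bc)%R -> (0 < eps)%R -> (1 <= K)%R ->
  ((2 * lam + 1) / c1 <= ln K)%R ->
  (4 * (Bc * expR (2 * lam * ln 2) * n%:R ^+ (2 * L + 1)) <= eps * K)%R ->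
  let t := fun k : nat => (Bc * (n%:R ^+ L * (2 ^+ k.+1 * K) `^ lam) ^+ 2)%R in
  let G := fun w => \sum_(k <oo) (t k * \1_[set w | (2 ^+ k * K < M w)%R] w)%:E in
  [/\ measurable_fun [set w | (K < M w)%R] G,
      (forall w, 0 <= G w),
      (forall w, (K < M w)%R -> (Bc * (n%:R ^+ L * M w `^ lam) ^+ 2)%:E <= G w) &
      \int[P]_(w in [set w | (K < M w)%R]) G w <= eps%:E].
Proof.
move=> mM n1 tail c0 lam0 B0 e0 K1 hK hW t G.
have t0 : forall k, (0 <= t k)%R.
  by move=> k; rewrite /t mulr_ge0 // sqr_ge0.
have mEk : forall k, measurable [set w | (2 ^+ k * K < M w)%R].
  by move=> k; apply: meas_gt.
have mE : measurable [set w | (K < M w)%R] by apply: meas_gt.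
have h0 : forall k w, 0 <= (t k * \1_[set w | (2 ^+ k * K < M w)%R] w)%:E.
  by move=> k w; rewrite lee_fin mulr_ge0 // indicE ler0n.
have mh : forall k, measurable_fun setT
    (fun w => (t k * \1_[set w | (2 ^+ k * K < M w)%R] w)%:E).
  move=> k; apply/measurable_EFinP; apply: measurable_funM.
    exact: measurable_cst.
  by apply/measurable_indicP; apply: mEk.
split.
- apply: (measurable_funS measurableT) => //.
  exact: (ge0_emeasurable_sum (P := xpredT)).
- by move=> w; rewrite /G; apply: nneseries_ge0 => k _ _; apply: h0.
- move=> w hw.
  have K0 : (0 < K)%R by apply: lt_le_trans ltr01 K1.
  have [k [hk1 hk2]] := @dyadic R K (M w) K0 hw.
  have Mw0 : (0 <= M w)%R by apply: ltW; apply: lt_trans hw.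
  have htk : (Bc * (n%:R ^+ L * M w `^ lam) ^+ 2 <= t k)%R.
    rewrite /t; apply: ler_wpM2l => //; apply: sq_le.
    rewrite ger0_norm ?mulr_ge0 ?exprn_ge0 ?ler0n ?powR_ge0 //.
    apply: ler_wpM2l; first by rewrite exprn_ge0 ?ler0n.
    apply: ge0_ler_powR => //; rewrite ?nnegrE //.
    by rewrite mulr_ge0 ?exprn_ge0 // ltW.
  apply: le_trans (_ : (t k)%:E <= G w); first by rewrite lee_fin.
  have := @nneseries_lim_ge R (fun i => (t i * \1_[set w | (2 ^+ i * K < M w)%R] w)%:E)
    xpredT 0 k.+1 (fun i _ _ => h0 i w).
  apply: le_trans.
  rewrite big_nat_recr //= indicE mem_set // mulr1.
  by apply: lee_paddl => //; apply: sume_ge0 => i _; apply: h0.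
- rewrite /G integral_nneseries //; last first.
    by move=> k; apply: measurable_funS (mh k).
  apply: le_trans (epsilon_trick0 xpredT (ltW e0)).
  apply: lee_nneseries => [k _ _|k _]; first by apply: integral_ge0 => w _; apply: h0.
  rewrite (eq_integral (fun w => (t k)%:E * (\1_[set w | (2 ^+ k * K < M w)%R] w)%:E));
    last by move=> w _; rewrite EFinM.
  rewrite ge0_integralZl_EFin //; first last.
  + by apply/measurable_EFinP; apply: measurable_indic; apply: mEk.
  rewrite integral_indic //.
  apply: le_trans (lee_wpmul2l _ (measureIl _ _ _)) _ => //; first by rewrite lee_fin.
  have x1 : (1 <= 2 ^+ k * K)%R.
    rewrite -[1%R]mulr1 ler_pM // exprn_ege1 //; lra.
  apply: le_trans (lee_wpmul2l _ (tail _ x1)) _; first by rewrite lee_fin.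
  rewrite -EFinM lee_fin.
  exact: term_bound.
Qed.

End SerB.

Section PB.
Variable R : realType.
Lemma powbound (n L : nat) (m lam : R) : (1 <= n)%N -> 0 <= m -> 0 <= lam ->
  lam <= L%:R -> (Num.sqrt n%:R * m) `^ lam <= n%:R ^+ L * m `^ lam.
Proof.
move=> n1 m0 l0 lL.
have n1' : 1 <= n%:R :> R by rewrite ler1n.
rewrite powRM ?sqrtr_ge0 //; apply: ler_wpM2r; first exact: powR_ge0.
apply: (@le_trans _ _ (n%:R `^ lam)).
  apply: ge0_ler_powR => //; rewrite ?nnegrE ?sqrtr_ge0 ?ler0n //.
  have s0 := sqrtr_ge0 (n%:R : R).
  have ss := sqr_sqrtr (ler0n R n).
  nra.
rewrite -powR_mulrn ?ler0n //.
exact: (ler_powR n1' lL).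
Qed.

Lemma powR_ge1' (m lam : R) : 1 <= m -> 0 <= lam -> 1 <= m `^ lam.
Proof.
move=> m1 l0; rewrite -(powRr0 m); exact: ler_powR.
Qed.
End PB.

Theorem proposition3p6 (R : realType) (u v : R) (huv : u < v)
  (dOm : nat -> measure_display) (Om : forall n : nat, measurableType (dOm n))
  (P : forall n : nat, probability (Om n) R)
  (X Y : forall n : nat, Om n -> n.-tuple R)
  (phi : forall n : nat, n.-tuple R -> R)
  (c1 c2 lam : R) :
  (forall n, uniform_cube huv (P n) (X n)) ->
  (forall n, measurable_fun setT (Y n)) ->
  (forall n, measurable_fun setT (phi n)) ->
  (* condition (i) *)
  0 < c1 ->
  (forall (n : nat) (t : R) (i : 'I_n), 1 <= t ->
     (P n [set w | (t <= `|tnth (Y n w) i|)%R] <= (2 * expR (- (c1 * (ln t) ^+ 2)))%R%:E)%E) ->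
  (* condition (ii) *)
  0 < c2 -> 2 <= lam ->
  (forall (n : nat) (y : n.-tuple R), `|phi n y| <= c2 * (1 + norm2 y `^ lam)) ->
  exists (N : nat) (c : nat -> nat -> nat -> R),
    forall (n : nat), (1 <= n)%N ->
    forall (a : seq nat), arch n a ->
    forall (Rb : R), 0 < Rb ->
    forall (K D : R), 1 <= K -> 1 <= D ->
    forall (eps : R), 0 < eps < 1 ->
    poly3 N c eps^-1 n%:R D <= K ->
    forall (A : nat -> nat -> nat -> R) (b : nat -> nat -> R), param_bound a Rb A b ->
      (`| risk (P n) (X n) (Y n) (@clipped_net R a A b D n) (truncphi K (phi n))
          - risk (P n) (X n) (Y n) (@clipped_net R a A b D n) (phi n) | <= eps%:E)%E.
Proof.
move=> hX hY hphi c10 tail c20 lam2 hgrow.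
have lam0 : 0 <= lam by lra.
set L := Num.bound lam.
have hL : lam <= L%:R by apply: ltW; apply: archi_boundP.
set K0 := expR ((2 * lam + 1) / c1).
set C4 := expR (2 * lam * ln 2).
have C40 : 0 <= C4 by apply: ltW; apply: expR_gt0.
set Cc := 4 * C4 * (1 + 2 * c2) ^+ 2.
have Cc0 : 0 <= Cc.
  by rewrite /Cc; apply: mulr_ge0; [apply: mulr_ge0; lra | apply: sqr_ge0].
pose c := fun i j k : nat => if (i == 0)%N && (j == 0)%N && (k == 0)%N then K0
   else if (i == 1)%N && (j == 2 * L + 1)%N && (k == 2)%N then Cc else 0.
have cge0 : forall i j k, 0 <= c i j k.
  move=> i j k; rewrite /c; case: ifP => _; first by apply: ltW; apply: expR_gt0.
  by case: ifP.
exists (2 * L + 1).+2, c.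
move=> n n1 a ha Rb hRb K D K1 D1 eps /andP[e0 e1] hpoly A b hAb.
have D0 : 0 <= D by lra.
have einv0 : 0 <= eps^-1 by rewrite invr_ge0 ltW.
have hK0 : K0 <= K.
  apply: le_trans hpoly.
  have := @poly3_ge R (2 * L + 1).+2 c eps^-1 n%:R D 0 0 0 isT isT isT cge0 einv0 (ler0n _ _) D0.
  by rewrite /c /= !expr0 !mulr1.
have hKC : Cc * eps^-1 ^+ 1 * n%:R ^+ (2 * L + 1) * D ^+ 2 <= K.
  apply: le_trans hpoly.
  have := @poly3_ge R (2 * L + 1).+2 c eps^-1 n%:R D 1 (2 * L + 1) 2 isT (leqnSn _) isT cge0 einv0 (ler0n _ _) D0.
  by rewrite /c /= eqxx.
have nR1 : 1 <= n%:R :> R by rewrite ler1n.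
have nL1 : 1 <= n%:R ^+ L :> R by rewrite exprn_ege1.
set M := fun w => norminf (Y n w).
have mM : measurable_fun setT M by apply: meas_norminf.
have M0 : forall w, 0 <= M w by move=> w; apply: norminf_ge0.
set fX := fun w => clipped_net a A b D (X n w).
have mfX : measurable_fun setT fX by apply: meas_net => //; case: (hX n).
set gY := fun w => phi n (Y n w).
have mgY : measurable_fun setT gY by apply: measurableT_comp (hphi n) (hY n).
have hf : forall w, `|fX w| <= D by move=> w; apply: clip_norm.
have hgr : forall w, `|gY w| <= c2 * (1 + n%:R ^+ L * M w `^ lam).
  move=> w; apply: le_trans (hgrow n (Y n w)) _.
  apply: ler_wpM2l; first lra.
  rewrite lerD2l; apply: le_trans (@powbound R n L (M w) lam n1 (M0 w) lam0 hL).
  apply: ge0_ler_powR => //; rewrite ?nnegrE ?mulr_ge0 ?sqrtr_ge0 ?M0 //.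
  exact: norm2_le.
set Cb := c2 * (1 + n%:R ^+ L * K `^ lam).
have hg : forall w, M w <= K -> `|gY w| <= Cb.
  move=> w hw; apply: le_trans (hgr w) _; rewrite /Cb.
  apply: ler_wpM2l; first lra.
  rewrite lerD2l; apply: ler_wpM2l; first lra.
  by apply: ge0_ler_powR => //; rewrite nnegrE ?M0 //; lra.
set Bc := (D + 2 * c2) ^+ 2.
have Bc0 : 0 <= Bc by apply: sqr_ge0.
have hlnK : (2 * lam + 1) / c1 <= ln K.
  by rewrite -(expRK ((2 * lam + 1) / c1)) ler_ln ?posrE ?expR_gt0 //; lra.
have hW : 4 * (Bc * expR (2 * lam * ln 2) * n%:R ^+ (2 * L + 1)) <= eps * K.
  set Nn := n%:R ^+ (2 * L + 1) in hKC *.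
  have Nn0 : 0 <= Nn by rewrite exprn_ge0 // ler0n.
  have hB : Bc <= (1 + 2 * c2) ^+ 2 * D ^+ 2.
    rewrite -exprMn; apply: sq_le; rewrite ger0_norm; nra.
  apply: (@le_trans _ _ (4 * ((1 + 2 * c2) ^+ 2 * D ^+ 2 * C4 * Nn))).
    rewrite -/C4; apply: ler_wpM2l => //; apply: ler_wpM2r => //.
    by apply: ler_wpM2r.
  have -> : 4 * ((1 + 2 * c2) ^+ 2 * D ^+ 2 * C4 * Nn) =
     eps * (Cc * eps^-1 ^+ 1 * Nn * D ^+ 2).
    by rewrite /Cc; field; rewrite gt_eqF.
  by apply: ler_wpM2l => //; apply: ltW.
have tl := @tail_bound _ _ R (P n) n (Y n) c1 (hY n) (tail n).
have [mG G0 hGp hint] := @seriesB _ _ R (P n) n M c1 lam Bc K eps L mM n1 tl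
  c10 lam0 Bc0 e0 K1 hlnK hW.
rewrite /risk /truncphi.
apply: (@absA _ _ R (P n) fX gY M K D Cb eps _ mfX mgY mM hf hg mG
   (fun w _ => G0 w)) => //.
move=> w hw; have := hGp w hw.
set Q := n%:R ^+ L * M w `^ lam.
have hM1 : 1 <= M w `^ lam.
  by apply: (@powR_ge1' R (M w) lam) => //; lra.
have Q1 : 1 <= Q by rewrite /Q; nra.
have eQ : Bc * Q ^+ 2 = ((D + 2 * c2) * Q) ^+ 2.
  by rewrite [in RHS]exprMn.
rewrite eQ => hQ; split; apply: le_trans hQ; rewrite lee_fin; apply: sq_le.
  by apply: le_trans (hf w) _; nra.
apply: le_trans (ler_normB _ _) _.
have := hgr w; rewrite -/Q => hgw.
have := hf w; nra.
Qed.
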